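(* Let $G=(V,E)$ be a claw-free graph and $I$ a maximum cardinality independent set of $G$. Let $a,b\in I$, $a\ne b$, and let $X$ be a pack different from $V_{a,b}$. If there is an edge of $G$ with one endpoint in $V_{a,b}$ and the other in $X$, then $X$ and $V_{a,b}$ have a common leg, i.e., $X=V_a$ or $X=V_b$ or $X=V_{a,c}$ or $X=V_{b,c}$ for some $c\in I$.
   Context: Graphs are finite, simple, undirected; claw-free means no induced $K_{1,3}$. For $a\ne b$ in $I$ let $V_{a,b}=V_{b,a}=\{v\in V\setminus I: N(v)\cap I=\{a,b\}\}$, and for $a\in I$ let $V_a=\{v\in V\setminus I : N(v)\cap I=\{a\}\}$. These sets are called packs: the $V_a$ are $1$-packs with leg $a$, the $V_{a,b}$ are $2$-packs with legs $a$ and $b$. (Every vertex of $V\setminus I$ has one or two neighbours in $I$, so the packs partition $V\setminus I$.) *)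

(* Defs.v *)
(* A simple graph on a finite vertex type T is a
   symmetric irreflexive relation e : rel T. *)
From mathcomp Require Import all_boot.
Set Implicit Arguments. Unset Strict Implicit. Unset Printing Implicit Defensive.

Definition claw_free (T : finType) (e : rel T) : Prop :=
  forall x y z w : T, e x y -> e x z -> e x w ->
    y != z -> y != w -> z != w -> [|| e y z, e y w | e z w].

Definition independent (T : finType) (e : rel T) (S : {set T}) : Prop :=
  forall x y, x \in S -> y \in S -> ~~ e x y.

Definition maximum_independent (T : finType) (e : rel T) (I : {set T}) : Prop :=
  independent e I /\ forall S : {set T}, independent e S -> #|S| <= #|I|.

Definition pack1 (T : finType) (e : rel T) (I : {set T}) (a : T) : {set T} :=
  [set v | (v \notin I) && ([set u in I | e v u] == [set a])].

Definition pack2 (T : finType) (e : rel T) (I : {set T}) (a b : T) : {set T} :=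
  [set v | (v \notin I) && ([set u in I | e v u] == [set a; b])].

Definition is_pack (T : finType) (e : rel T) (I X : {set T}) : Prop :=
  (exists2 c, c \in I & X = pack1 e I c) \/
  (exists c d, [/\ c \in I, d \in I, c != d & X = pack2 e I c d]).

(* Main.v *)
Require Import Defs.
From mathcomp Require Import all_boot.
Set Implicit Arguments. Unset Strict Implicit.

Lemma p1_non (T : finType) (e : rel T) (I : {set T}) c v x :
  v \in pack1 e I c -> x \in I -> x != c -> ~~ e v x.
Proof.
rewrite inE => /andP[_ /eqP/setP/(_ x)]; rewrite !inE => H xI; rewrite xI /= in H.
by rewrite H => /negbTE ->.
Qed.

Lemma p2_non (T : finType) (e : rel T) (I : {set T}) c d v x :
  v \in pack2 e I c d -> x \in I -> x != c -> x != d -> ~~ e v x.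
Proof.
rewrite inE => /andP[_ /eqP/setP/(_ x)]; rewrite !inE => H xI; rewrite xI /= in H.
by rewrite H => /negbTE -> /negbTE ->.
Qed.

Lemma p2_adj (T : finType) (e : rel T) (I : {set T}) c d v :
  v \in pack2 e I c d -> c \in I -> d \in I -> e v c /\ e v d.
Proof.
rewrite inE => /andP[_ /eqP/setP H] cI dI; split.
  by move: (H c); rewrite !inE cI eqxx /= => ->.
by move: (H d); rewrite !inE dI eqxx orbT /= => ->.
Qed.

Lemma p1_notin (T : finType) (e : rel T) (I : {set T}) c v :
  v \in pack1 e I c -> v \notin I.
Proof. by rewrite inE => /andP[]. Qed.

Lemma p2_notin (T : finType) (e : rel T) (I : {set T}) c d v :
  v \in pack2 e I c d -> v \notin I.
Proof. by rewrite inE => /andP[]. Qed.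

Lemma p2C (T : finType) (e : rel T) (I : {set T}) c d :
  pack2 e I c d = pack2 e I d c.
Proof. by apply/setP => x; rewrite !inE setUC. Qed.

Theorem lemma5 (T : finType) (e : rel T) (I : {set T}) (a b : T) (X : {set T}) :
  symmetric e -> irreflexive e -> claw_free e ->
  maximum_independent e I ->
  a \in I -> b \in I -> a != b ->
  is_pack e I X -> X != pack2 e I a b ->
  (exists u v, [/\ u \in pack2 e I a b, v \in X & e u v]) ->
  X = pack1 e I a \/ X = pack1 e I b \/
  (exists c, c \in I /\
     ((c != a /\ X = pack2 e I a c) \/ (c != b /\ X = pack2 e I b c))).
Proof.
move=> sym irr claw [ind _] aI bI ab Xp XN [u [v [uP vX uv]]].
have [ua ub] := p2_adj uP aI bI.
have clawC : ~~ e v a -> ~~ e v b -> v \notin I -> False.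
  move=> va vb vI.
  have av : a != v by apply/eqP => E; rewrite -E aI in vI.
  have bv : b != v by apply/eqP => E; rewrite -E bI in vI.
  move: (claw u a b v ua ub uv ab av bv).
  by rewrite (negbTE (ind a b aI bI)) sym (negbTE va) sym (negbTE vb).
case: Xp => [[c cI XE]|[c [d [cI dI cd XE]]]].
  case: (eqVneq c a) => [ca|ca]; first by left; rewrite XE ca.
  case: (eqVneq c b) => [cb|cb]; first by right; left; rewrite XE cb.
  rewrite XE in vX; exfalso; apply: clawC.
  - by apply: (p1_non vX aI); rewrite eq_sym.
  - by apply: (p1_non vX bI); rewrite eq_sym.
  - exact: p1_notin vX.
right; right.
case: (eqVneq c a) => [ca|ca].
  by exists d; split => //; left; split; [rewrite -ca eq_sym|rewrite XE ca].
case: (eqVneq d a) => [da|da].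
  by exists c; split => //; left; split; [rewrite -da|rewrite XE da p2C].
case: (eqVneq c b) => [cb|cb].
  by exists d; split => //; right; split; [rewrite -cb eq_sym|rewrite XE cb].
case: (eqVneq d b) => [db|db].
  by exists c; split => //; right; split; [rewrite -db|rewrite XE db p2C].
rewrite XE in vX; exfalso; apply: clawC.
- by apply: (p2_non vX aI); rewrite eq_sym.
- by apply: (p2_non vX bI); rewrite eq_sym.
- exact: p2_notin vX.
Qed.
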